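(* In the standing setting, suppose $G$ is the series or parallel composition of SP digraphs $G_1$ and $G_2$, and suppose a robust $\boldsymbol b$-flow exists. Then there exists an optimal robust $\boldsymbol b$-flow $\boldsymbol f=(f^1,f^2)$ with $\delta(f^2|G_1)\ge\delta(f^1|G_1)$ and $\delta(f^2|G_2)\ge\delta(f^1|G_2)$.
   Context: A RobMCF instance $(G,u,c,\boldsymbol b)$ consists of a finite directed graph (parallel arcs allowed) $G=(V,A)$ whose arc set is partitioned as $A=A^{\mathrm{fix}}\cup A^{\mathrm{free}}$ into fixed and free arcs, capacities $u:A\to\mathbb Z_{\ge0}$, costs $c:A\to\mathbb Z_{\ge0}$, a finite nonempty set of scenarios $\Lambda$, and balances $b^\lambda:V\to\mathbb Z$ with $\sum_{v}b^\lambda(v)=0$. A $b^\lambda$-flow is a function $f^\lambda:A\to\mathbb Z_{\ge0}$ with $f^\lambda(a)\le u(a)$ for all $a$ and $\sum_{a=(v,w)\in A}f^\lambda(a)-\sum_{a=(w,v)\in A}f^\lambda(a)=b^\lambda(v)$ for all $v\in V$; its cost is $c(f^\lambda)=\sum_a c(a)f^\lambda(a)$. A robust $\boldsymbol b$-flow is a tuple $(f^\lambda)_{\lambda\in\Lambda}$ of $b^\lambda$-flows with $f^\lambda(a)=f^{\lambda'}(a)$ for all $a\in A^{\mathrm{fix}}$, $\lambda,\lambda'\in\Lambda$; its cost is $\max_\lambda c(f^\lambda)$; it is optimal if of minimum cost. Series-parallel (SP) digraphs are defined recursively: a single arc $(o,q)$ is an SP digraph with origin $o$ and target $q$; if $G_1$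 (origin $o_1$, target $q_1$) and $G_2$ (origin $o_2$, target $q_2$) are SP digraphs, then their series composition (identify $q_1$ with $o_2$; origin $o_1$, target $q_2$) and their parallel composition (identify $o_1$ with $o_2$ to form the origin and $q_1$ with $q_2$ to form the target) are SP digraphs. Standing setting: $G$ is an SP digraph with origin $o$ and target $q$, $\Lambda=\{1,2\}$, and there are integers $0\le d^1\le d^2$ with $b^\lambda(o)=d^\lambda$, $b^\lambda(q)=-d^\lambda$ and $b^\lambda(v)=0$ for all other $v$ (unique source $o$, unique sink $q$). For an SP subgraph $H$ of $G$ with origin $o_H$ and a flow $f^\lambda$, write $\delta(f^\lambda|H)=\sum_{a=(o_H,w)\in A(H)}f^\lambda(a)$ for the flow value entering $H$. *)

(* Defs.v *)
From mathcomp Require Import all_boot all_order all_algebra.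
Set Implicit Arguments. Unset Strict Implicit. Unset Printing Implicit Defensive.
Import GRing.Theory Num.Theory.
Local Open Scope ring_scope.

(* A finite digraph with (possibly parallel) arcs: vertex type V, arc type A,
   each arc a goes from tl a to hd a. An SP subgraph is given by its arc set
   S : {set A} together with its origin and target. *)
Section Defs.
Variables (V A : finType) (tl hd : A -> V).

Definition verts (S : {set A}) : {set V} :=
  [set v | [exists a in S, (tl a == v) || (hd a == v)]].

Definition series_comp (S1 : {set A}) (o1 q1 : V) (S2 : {set A}) (o2 q2 : V)
    (S : {set A}) (o q : V) : Prop :=
  [disjoint S1 & S2] /\ S = S1 :|: S2 /\ q1 = o2 /\ o = o1 /\ q = q2 /\
  verts S1 :&: verts S2 = [set q1].

Definition parallel_comp (S1 : {set A}) (o1 q1 : V) (S2 : {set A}) (o2 q2 : V)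
    (S : {set A}) (o q : V) : Prop :=
  [disjoint S1 & S2] /\ S = S1 :|: S2 /\ o = o1 /\ o = o2 /\ q = q1 /\ q = q2 /\
  verts S1 :&: verts S2 = [set o; q].

Inductive isSP : {set A} -> V -> V -> Prop :=
  | SP_arc (a : A) : tl a != hd a -> isSP [set a] (tl a) (hd a)
  | SP_series S1 o1 q1 S2 o2 q2 S o q :
      isSP S1 o1 q1 -> isSP S2 o2 q2 ->
      series_comp S1 o1 q1 S2 o2 q2 S o q -> isSP S o q
  | SP_parallel S1 o1 q1 S2 o2 q2 S o q :
      isSP S1 o1 q1 -> isSP S2 o2 q2 ->
      parallel_comp S1 o1 q1 S2 o2 q2 S o q -> isSP S o q.

Definition st_balance (o q : V) (d : nat) (v : V) : int :=
  (if v == o then d%:Z else if v == q then - d%:Z else 0)%R.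

Definition is_bflow (u : A -> nat) (b : V -> int) (f : A -> nat) : Prop :=
  (forall a, f a <= u a)%N /\
  forall v, ((\sum_(a | tl a == v) f a)%N%:Z - (\sum_(a | hd a == v) f a)%N%:Z)
            = b v.

Definition flow_cost (c : A -> nat) (f : A -> nat) : nat := (\sum_a c a * f a)%N.

(* robust flow for two scenarios (Lambda = {1,2}) *)
Definition is_robust_flow (fixed : {set A}) (u : A -> nat) (b1 b2 : V -> int)
    (f1 f2 : A -> nat) : Prop :=
  [/\ is_bflow u b1 f1, is_bflow u b2 f2 & forall a, a \in fixed -> f1 a = f2 a].

Definition robust_cost (c : A -> nat) (f1 f2 : A -> nat) : nat :=
  maxn (flow_cost c f1) (flow_cost c f2).

Definition is_optimal_robust_flow (fixed : {set A}) (u c : A -> nat)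
    (b1 b2 : V -> int) (f1 f2 : A -> nat) : Prop :=
  is_robust_flow fixed u b1 b2 f1 f2 /\
  forall g1 g2, is_robust_flow fixed u b1 b2 g1 g2 ->
    (robust_cost c f1 f2 <= robust_cost c g1 g2)%N.

Definition delta (S : {set A}) (oH : V) (f : A -> nat) : nat :=
  (\sum_(a in S | tl a == oH) f a)%N.

End Defs.

(* Main.v *)
Require Import Defs.
From mathcomp Require Import all_boot all_order all_algebra zify.
From Stdlib Require Import Classical.
Set Implicit Arguments. Unset Strict Implicit. Unset Printing Implicit Defensive.
Import GRing.Theory Num.Theory.

Definition net (V A : finType) (tl hd : A -> V) (S : {set A}) (g : A -> nat) (w : V) : int :=
  (Posz (\sum_(a in S | tl a == w) g a)%N - Posz (\sum_(a in S | hd a == w) g a)%N)%R.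

Definition flowS (V A : finType) (tl hd : A -> V) (S : {set A}) (o q : V) (t : nat) (g : A -> nat) :=
  forall w, net tl hd S g w = st_balance o q t w.

Lemma sumU (A : finType) (S1 S2 : {set A}) (P : pred A) (F : A -> nat) :
  [disjoint S1 & S2] ->
  (\sum_(a in S1 :|: S2 | P a) F a = \sum_(a in S1 | P a) F a + \sum_(a in S2 | P a) F a)%N.
Proof.
move=> dis; rewrite !big_mkcondr /=.
rewrite (eq_bigl [predU S1 & S2]) ?bigU // => a; by rewrite !inE.
Qed.

Lemma net_split (V A : finType) (tl hd : A -> V) (S1 S2 : {set A}) (g : A -> nat) (w : V) :
  [disjoint S1 & S2] ->
  net tl hd (S1 :|: S2) g w = (net tl hd S1 g w + net tl hd S2 g w)%R.
Proof. move=> dis; rewrite /net !sumU //; lia. Qed.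

Lemma net_out (V A : finType) (tl hd : A -> V) (S : {set A}) (g : A -> nat) (w : V) :
  w \notin verts tl hd S -> net tl hd S g w = 0%R.
Proof.
move=> wS; rewrite /net !big1 //= => a /andP[aS /eqP E]; case/negP: wS;
  rewrite inE; apply/existsP; exists a; rewrite aS E eqxx ?orbT //.
Qed.

Lemma sum_part (V A : finType) (f : A -> V) (S : {set A}) (g : A -> nat) :
  (\sum_(w : V) \sum_(a in S | f a == w) g a = \sum_(a in S) g a)%N.
Proof.
under eq_bigr do rewrite big_mkcond /=.
rewrite exchange_big /= [RHS]big_mkcond /=; apply: eq_bigr => a _.
rewrite (bigD1 (f a)) //= eqxx andbT big1 ?addn0 // => w /negPf ne.
by rewrite eq_sym ne andbF.
Qed.

Lemma net_sum0 (V A : finType) (tl hd : A -> V) (S : {set A}) (g : A -> nat) :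
  (\sum_(w : V) net tl hd S g w = 0)%R.
Proof.
rewrite /net sumrB -!(big_morph Posz PoszD (erefl (Posz 0))) !sum_part.
by rewrite subrr.
Qed.

Lemma two_terminal (V : finType) (o q : V) (h : V -> int) :
  o != q -> (forall w, w != o -> w != q -> h w = 0%R) -> (\sum_w h w = 0)%R ->
  h q = (- h o)%R.
Proof.
move=> oq hz; rewrite (bigD1 o) // (bigD1 q) 1?eq_sym //= big1 ?addr0.
  by move=> E; lia.
by move=> w /andP[wo wq]; apply: hz.
Qed.
Lemma vertsUl (V A : finType) (tl hd : A -> V) (S1 S2 : {set A}) x :
  x \in verts tl hd S1 -> x \in verts tl hd (S1 :|: S2).
Proof.
rewrite !inE => /existsP[a /andP[aS h]]; apply/existsP; exists a; by rewrite inE aS.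
Qed.

Lemma vertsUr (V A : finType) (tl hd : A -> V) (S1 S2 : {set A}) x :
  x \in verts tl hd S2 -> x \in verts tl hd (S1 :|: S2).
Proof. by rewrite setUC; apply: vertsUl. Qed.

Lemma inter_in (V A : finType) (tl hd : A -> V) (S1 S2 : {set A}) (X : {set V}) x :
  verts tl hd S1 :&: verts tl hd S2 = X ->
  x \in verts tl hd S1 -> x \in verts tl hd S2 -> x \in X.
Proof. by move=> <- h1 h2; rewrite inE h1 h2. Qed.

Lemma sp_facts (V A : finType) (tl hd : A -> V) (S : {set A}) (o q : V) :
  isSP tl hd S o q ->
  [/\ o \in verts tl hd S, q \in verts tl hd S, o != q &
      forall a, a \in S -> hd a != o].
Proof.
elim=> {S o q}.
- move=> a ne; split => //.
  + by rewrite inE; apply/existsP; exists a; rewrite inE !eqxx.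
  + by rewrite inE; apply/existsP; exists a; rewrite inE !eqxx orbT.
  + by move=> x; rewrite inE => /eqP ->; rewrite eq_sym.
- move=> S1 o1 q1 S2 o2 q2 S o q _ [v1 w1 n1 h1] _ [v2 w2 n2 h2]
    [dis [-> [E1 [-> [-> I]]]]]; subst o2.
  have o1n : o1 \notin verts tl hd S2.
    by apply/negP => X; move: (inter_in I v1 X); rewrite inE; apply/negP.
  split.
  + exact: vertsUl.
  + exact: vertsUr.
  + by apply/negP => /eqP E; rewrite E w2 in o1n.
  + move=> a; rewrite inE => /orP[aS|aS]; first exact: h1.
    apply/negP => /eqP E; case/negP: o1n; rewrite -E inE; apply/existsP.
    by exists a; rewrite aS eqxx orbT.
- move=> S1 o1 q1 S2 o2 q2 S o q _ [v1 w1 n1 h1] _ [v2 w2 n2 h2]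
    [dis [-> [-> [E2 [-> [E3 I]]]]]]; subst o2 q2.
  split.
  + exact: vertsUl.
  + exact: vertsUl.
  + done.
  + by move=> a; rewrite inE => /orP[aS|aS]; [apply: h1|apply: h2].
Qed.

Lemma bal_add (V : finType) (o q : V) (a b : nat) (w : V) :
  (st_balance o q a w + st_balance o q b w)%R = st_balance o q (a + b) w.
Proof. rewrite /st_balance; case: (w == o); case: (w == q) => /=; lia. Qed.

Lemma bal_series (V : finType) (o1 q1 q2 : V) (t : nat) (w : V) :
  o1 != q1 -> q1 != q2 -> o1 != q2 ->
  (st_balance o1 q1 t w + st_balance q1 q2 t w)%R = st_balance o1 q2 t w.
Proof.
move=> n1 n2 n3; rewrite /st_balance.
have [->|wo] := eqVneq w o1.
  by rewrite ?eqxx (negPf n1) (negPf n3); lia.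
have [->|wq] := eqVneq w q1.
  by rewrite (negPf n2); lia.
by case: (w == q2); lia.
Qed.

Lemma net_origin (V A : finType) (tl hd : A -> V) (S : {set A}) (o q : V) (g : A -> nat) :
  isSP tl hd S o q -> net tl hd S g o = Posz (delta tl S o g).
Proof.
move=> sp; case: (sp_facts sp) => _ _ _ hin.
rewrite /net /delta [X in (_ - Posz X)%R]big1 ?subr0 // => a /andP[aS /eqP E].
by move: (hin a aS); rewrite E eqxx.
Qed.

Lemma flow_delta (V A : finType) (tl hd : A -> V) (S : {set A}) (o q : V) (v : nat) (g : A -> nat) :
  isSP tl hd S o q -> flowS tl hd S o q v g -> delta tl S o g = v.
Proof.
move=> sp F; have := F o; rewrite (net_origin _ sp) /st_balance eqxx.
by case.
Qed.

Lemma net_eq (V A : finType) (tl hd : A -> V) (S : {set A}) (g g' : A -> nat) (w : V) :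
  (forall a, a \in S -> g a = g' a) -> net tl hd S g w = net tl hd S g' w.
Proof.
move=> E; rewrite /net; congr (Posz _ - Posz _)%R; apply: eq_bigr => a /andP[aS _];
  exact: E.
Qed.

Lemma delta_eq (V A : finType) (tl : A -> V) (S : {set A}) (g g' : A -> nat) (o : V) :
  (forall a, a \in S -> g a = g' a) -> delta tl S o g = delta tl S o g'.
Proof. move=> E; apply: eq_bigr => a /andP[aS _]; exact: E. Qed.

Definition glue (A : finType) (S : {set A}) (x y : A -> nat) :=
  fun a => if a \in S then x a else y a.

Lemma glue_net (V A : finType) (tl hd : A -> V) (S1 S2 : {set A}) (x y : A -> nat) (w : V) :
  [disjoint S1 & S2] ->
  net tl hd (S1 :|: S2) (glue S1 x y) w = (net tl hd S1 x w + net tl hd S2 y w)%R.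
Proof.
move=> dis; rewrite net_split //; congr (_ + _)%R; apply: net_eq => a aS; rewrite /glue.
  by rewrite aS.
by rewrite (disjointFl dis aS).
Qed.

Lemma part_flow (V A : finType) (tl hd : A -> V) (S1 S2 : {set A}) (o q : V) (g : A -> nat) :
  isSP tl hd S1 o q -> [disjoint S1 & S2] ->
  (forall w, w \in verts tl hd S1 -> w \in verts tl hd S2 -> (w == o) || (w == q)) ->
  (forall w, w != o -> w != q -> w \in verts tl hd S1 -> w \notin verts tl hd S2 ->
     net tl hd (S1 :|: S2) g w = 0%R) ->
  flowS tl hd S1 o q (delta tl S1 o g) g.
Proof.
move=> sp dis I Z; case: (sp_facts sp) => vo vq oq hin.
have zero : forall w, w != o -> w != q -> net tl hd S1 g w = 0%R.
  move=> w wo wq; case: (boolP (w \in verts tl hd S1)) => wS1; last exact: net_out.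
  have wS2 : w \notin verts tl hd S2.
    by apply/negP => /(I _ wS1); rewrite (negPf wo) (negPf wq).
  by rewrite -(Z w wo wq wS1 wS2) net_split // (net_out g wS2) addr0.
have no := net_origin g sp.
have nq := two_terminal oq zero (net_sum0 tl hd S1 g).
move=> w; rewrite /st_balance.
have [->|wo] := eqVneq w o; first by rewrite no.
have [->|wq] := eqVneq w q; first by rewrite nq no.
by rewrite zero.
Qed.

Lemma series_restrict (V A : finType) (tl hd : A -> V) (S1 S2 : {set A}) (o1 q1 q2 : V)
  (v : nat) (g : A -> nat) :
  isSP tl hd S1 o1 q1 -> isSP tl hd S2 q1 q2 -> [disjoint S1 & S2] ->
  verts tl hd S1 :&: verts tl hd S2 = [set q1] ->
  flowS tl hd (S1 :|: S2) o1 q2 v g ->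
  flowS tl hd S1 o1 q1 v g /\ flowS tl hd S2 q1 q2 v g.
Proof.
move=> sp1 sp2 dis I F.
case: (sp_facts sp1) => v1 w1 n1 h1; case: (sp_facts sp2) => v2 w2 n2 h2.
have I' : forall w, w \in verts tl hd S1 -> w \in verts tl hd S2 -> w == q1.
  by move=> w a b; move: (inter_in I a b); rewrite inE.
have o1n : o1 \notin verts tl hd S2.
  by apply/negP => X; move: (I' _ v1 X); apply/negP.
have q2n : q2 \notin verts tl hd S1.
  by apply/negP => X; move: (I' _ X w2); rewrite eq_sym; apply/negP.
have n3 : o1 != q2 by apply/negP => /eqP E; rewrite E w2 in o1n.
have P1 : flowS tl hd S1 o1 q1 (delta tl S1 o1 g) g.
  apply: (part_flow (S2 := S2)) => //.
    by move=> w a b; rewrite (I' w a b) orbT.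
  move=> w wo wq a b; rewrite F /st_balance (negPf wo).
  have -> // : (w == q2) = false.
  by apply/negP => /eqP E; rewrite -E a in q2n.
have d1 : delta tl S1 o1 g = v.
  have := F o1; rewrite net_split // (net_out g o1n) addr0 (net_origin _ sp1).
  by rewrite /st_balance eqxx; case.
rewrite d1 in P1; split => //.
have P2 : flowS tl hd S2 q1 q2 (delta tl S2 q1 g) g.
  apply: (part_flow (S2 := S1)) => //; first by rewrite disjoint_sym.
    by move=> w a b; rewrite (I' w b a).
  move=> w wo wq a b; rewrite setUC F /st_balance (negPf wq).
  have -> // : (w == o1) = false.
  by apply/negP => /eqP E; rewrite E v1 in b.
have d2 : delta tl S2 q1 g = v.
  have := F q1; rewrite net_split // P1 (net_origin _ sp2) /st_balance eqxx.
  rewrite [q1 == o1]eq_sym (negPf n1) (negPf n2) /= => E; lia.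
by rewrite d2 in P2.
Qed.

Lemma net1 (V A : finType) (tl hd : A -> V) (a : A) (g : A -> nat) (w : V) :
  net tl hd [set a] g w =
  (Posz (if tl a == w then g a else 0) - Posz (if hd a == w then g a else 0))%R.
Proof. by rewrite /net !big_mkcondr /= !big_set1. Qed.

Lemma flow1 (V A : finType) (tl hd : A -> V) (a : A) (v : nat) (g : A -> nat) :
  tl a != hd a -> (flowS tl hd [set a] (tl a) (hd a) v g <-> g a = v).
Proof.
move=> ne; split.
  move=> F; have := F (tl a); rewrite net1 /st_balance eqxx [hd a == _]eq_sym (negPf ne).
  move=> E; lia.
move=> E w; rewrite net1 /st_balance E [tl a == w]eq_sym [hd a == w]eq_sym.
have [->|wt] := eqVneq w (tl a).
  by rewrite (negPf ne); lia.
by case: (w == hd a); lia.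
Qed.

Lemma split_flow (V A : finType) (tl hd : A -> V) (S : {set A}) (o q : V) :
  isSP tl hd S o q -> forall (v1 v2 t : nat) (g1 g2 : A -> nat),
  flowS tl hd S o q v1 g1 -> flowS tl hd S o q v2 g2 ->
  minn v1 v2 <= t <= maxn v1 v2 ->
  exists g' g'', [/\ flowS tl hd S o q t g', flowS tl hd S o q (v1 + v2 - t) g'' &
    forall a, g' a + g'' a = g1 a + g2 a /\ minn (g1 a) (g2 a) <= g' a <= maxn (g1 a) (g2 a)].
Proof.
elim=> {S o q}.
- move=> a ne v1 v2 t g1 g2 /(flow1 _ _ ne) E1 /(flow1 _ _ ne) E2 Ht.
  exists (fun x => if x == a then t else g1 x), (fun x => if x == a then v1 + v2 - t else g2 x).
  split.
  + by apply/(flow1 _ _ ne); rewrite eqxx.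
  + by apply/(flow1 _ _ ne); rewrite eqxx.
  + move=> x; case: eqP => [->|_]; last lia.
    rewrite E1 E2; lia.
- move=> S1 o1 q1 S2 o2 q2 S o q sp1 IH1 sp2 IH2 H.
  have sp := SP_series sp1 sp2 H.
  case: (sp_facts sp) => _ _ n3 _.
  case: (sp_facts sp1) => _ _ n1 _.
  case: (sp_facts sp2) => _ _ n2 _.
  move: H n3 => [dis [-> [E [-> [-> I]]]]] n3; subst o2.
  move=> v1 v2 t g1 g2 F1 F2 Ht.
  case: (series_restrict sp1 sp2 dis I F1) => F11 F12.
  case: (series_restrict sp1 sp2 dis I F2) => F21 F22.
  case: (IH1 _ _ _ _ _ F11 F21 Ht) => x1 [y1 [X1 Y1 P1]].
  case: (IH2 _ _ _ _ _ F12 F22 Ht) => x2 [y2 [X2 Y2 P2]].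
  exists (glue S1 x1 x2), (glue S1 y1 y2); split.
  + by move=> w; rewrite glue_net // X1 X2 bal_series //.
  + by move=> w; rewrite glue_net // Y1 Y2 bal_series //.
  + by move=> a; rewrite /glue; case: (a \in S1).
- move=> S1 o1 q1 S2 o2 q2 S o q sp1 IH1 sp2 IH2 H.
  case: (sp_facts sp1) => _ _ n1 _.
  move: H => [dis [-> [-> [E2 [-> [E3 I]]]]]]; subst o2 q2.
  move=> v1 v2 t g1 g2 F1 F2 Ht.
  have I' : forall w, w \in verts tl hd S1 -> w \in verts tl hd S2 -> (w == o1) || (w == q1).
    by move=> w a b; move: (inter_in I a b); rewrite !inE.
  have I'' : forall w, w \in verts tl hd S2 -> w \in verts tl hd S1 -> (w == o1) || (w == q1).
    by move=> w a b; apply: I'.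
  have Z : forall g v, flowS tl hd (S1 :|: S2) o1 q1 v g ->
      forall w, w != o1 -> w != q1 -> net tl hd (S1 :|: S2) g w = 0%R.
    by move=> g v F w wo wq; rewrite F /st_balance (negPf wo) (negPf wq).
  have R : forall g v, flowS tl hd (S1 :|: S2) o1 q1 v g ->
    [/\ flowS tl hd S1 o1 q1 (delta tl S1 o1 g) g, flowS tl hd S2 o1 q1 (delta tl S2 o1 g) g
      & v = delta tl S1 o1 g + delta tl S2 o1 g].
    move=> g v F; split.
    + apply: (part_flow (S2 := S2)) => // w wo wq _ _; exact: (Z g v F).
    + apply: (part_flow (S2 := S1)) => //; first by rewrite disjoint_sym.
      by move=> w wo wq _ _; rewrite setUC; exact: (Z g v F).
    + have := F o1; rewrite net_split // (net_origin _ sp1) (net_origin _ sp2) /st_balance eqxx.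
      lia.
  case: (R _ _ F1) => A1 B1 E1; case: (R _ _ F2) => A2 B2 E2.
  set p1 := delta tl S1 o1 g1 in A1 E1; set r1 := delta tl S2 o1 g1 in B1 E1.
  set p2 := delta tl S1 o1 g2 in A2 E2; set r2 := delta tl S2 o1 g2 in B2 E2.
  pose t1 := minn (maxn p1 p2) (t - minn r1 r2).
  have Ht1 : minn p1 p2 <= t1 <= maxn p1 p2 by rewrite /t1; lia.
  have Ht2 : minn r1 r2 <= t - t1 <= maxn r1 r2 by rewrite /t1; lia.
  case: (IH1 _ _ _ _ _ A1 A2 Ht1) => x1 [y1 [X1 Y1 P1]].
  case: (IH2 _ _ _ _ _ B1 B2 Ht2) => x2 [y2 [X2 Y2 P2]].
  exists (glue S1 x1 x2), (glue S1 y1 y2); split.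
  + move=> w; rewrite glue_net // X1 X2 bal_add.
    have -> : t1 + (t - t1) = t by rewrite /t1; lia.
    done.
  + move=> w; rewrite glue_net // Y1 Y2 bal_add.
    have -> : p1 + p2 - t1 + (r1 + r2 - (t - t1)) = v1 + v2 - t by rewrite /t1; lia.
    done.
  + by move=> a; rewrite /glue; case: (a \in S1).
Qed.

Lemma ex_min (P : nat -> Prop) : (exists n, P n) -> exists n, P n /\ forall m, P m -> n <= m.
Proof.
move=> [n Pn]; elim/ltn_ind: n Pn => n IH Pn.
case: (classic (exists m, m < n /\ P m)) => [[m [lt Pm]]|N]; first exact: IH m lt Pm.
exists n; split=> // m Pm; rewrite leqNgt; apply/negP => lt; by apply: N; exists m; split.
Qed.

Lemma sumT (A : finType) (P : pred A) (F : A -> nat) :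
  (\sum_(a in [set: A] | P a) F a = \sum_(a | P a) F a)%N.
Proof. by apply: eq_bigl => a; rewrite in_setT. Qed.

Lemma bflowE (V A : finType) (tl hd : A -> V) (u : A -> nat) (o q : V) (d : nat) (f : A -> nat) :
  is_bflow tl hd u (st_balance o q d) f <->
  (forall a, f a <= u a) /\ flowS tl hd [set: A] o q d f.
Proof.
rewrite /is_bflow /flowS /net; split => [[H1 H2]|[H1 H2]]; split => // w.
  by rewrite !sumT.
by rewrite -H2 !sumT.
Qed.

Definition pc (A : finType) (c : A -> nat) (S : {set A}) (g : A -> nat) :=
  (\sum_(a in S) c a * g a)%N.

Lemma costU (A : finType) (c : A -> nat) (S1 S2 : {set A}) (f : A -> nat) :
  [set: A] = S1 :|: S2 -> [disjoint S1 & S2] ->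
  flow_cost c f = pc c S1 f + pc c S2 f.
Proof.
move=> ET dis; rewrite /flow_cost /pc -bigU //; apply: eq_bigl => a.
by rewrite !inE -in_setU -ET in_setT.
Qed.

Lemma pc_eq (A : finType) (c : A -> nat) (S : {set A}) (g g' : A -> nat) :
  (forall a, a \in S -> g a = g' a) -> pc c S g = pc c S g'.
Proof. by move=> E; apply: eq_bigr => a aS; rewrite E. Qed.

Lemma par_restrict (V A : finType) (tl hd : A -> V) (S1 S2 : {set A}) (o q : V) (v : nat) (g : A -> nat) :
  isSP tl hd S1 o q -> isSP tl hd S2 o q -> [disjoint S1 & S2] ->
  (forall w, w \in verts tl hd S1 -> w \in verts tl hd S2 -> (w == o) || (w == q)) ->
  flowS tl hd (S1 :|: S2) o q v g ->
  [/\ flowS tl hd S1 o q (delta tl S1 o g) g, flowS tl hd S2 o q (delta tl S2 o g) g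
      & v = delta tl S1 o g + delta tl S2 o g].
Proof.
move=> sp1 sp2 dis I F.
have Z : forall w, w != o -> w != q -> net tl hd (S1 :|: S2) g w = 0%R.
  by move=> w wo wq; rewrite F /st_balance (negPf wo) (negPf wq).
split.
+ apply: (part_flow (S2 := S2)) => // w wo wq _ _; exact: Z.
+ apply: (part_flow (S2 := S1)) => //; first by rewrite disjoint_sym.
    by move=> w a b; apply: I.
  by move=> w wo wq _ _; rewrite setUC; exact: Z.
+ have := F o; rewrite net_split // (net_origin _ sp1) (net_origin _ sp2) /st_balance eqxx.
  lia.
Qed.

Lemma exchange (V A : finType) (tl hd : A -> V) (fixed : {set A}) (u c : A -> nat)
  (S1 S2 : {set A}) (o q : V) (d1 d2 : nat) (f1 f2 : A -> nat) :
  isSP tl hd S1 o q -> isSP tl hd S2 o q -> [disjoint S1 & S2] -> [set: A] = S1 :|: S2 ->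
  (forall w, w \in verts tl hd S1 -> w \in verts tl hd S2 -> (w == o) || (w == q)) ->
  d1 <= d2 ->
  is_robust_flow tl hd fixed u (st_balance o q d1) (st_balance o q d2) f1 f2 ->
  (forall g1 g2, is_robust_flow tl hd fixed u (st_balance o q d1) (st_balance o q d2) g1 g2 ->
     robust_cost c f1 f2 <= robust_cost c g1 g2) ->
  delta tl S1 o f2 < delta tl S1 o f1 ->
  exists F1 F2, [/\ is_optimal_robust_flow tl hd fixed u c
       (st_balance o q d1) (st_balance o q d2) F1 F2,
     delta tl S1 o F1 <= delta tl S1 o F2 & delta tl S2 o F1 <= delta tl S2 o F2].
Proof.
move=> sp1 sp2 dis ET I d12 [/bflowE [cap1 T1] /bflowE [cap2 T2] fx] opt lt.
rewrite ET in T1 T2.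
case: (par_restrict sp1 sp2 dis I T1) => A1 B1 E1.
case: (par_restrict sp1 sp2 dis I T2) => A2 B2 E2.
set p1 := delta tl S1 o f1 in A1 E1 lt *; set r1 := delta tl S2 o f1 in B1 E1 *.
set p2 := delta tl S1 o f2 in A2 E2 lt *; set r2 := delta tl S2 o f2 in B2 E2 *.
have Ht : minn r1 r2 <= r1 + (p1 - p2) <= maxn r1 r2 by lia.
case: (split_flow sp2 B1 B2 Ht) => g' [g'' [G1 G2 P]].
have dis' : forall a, a \in S2 -> a \in S1 = false by move=> a aS; rewrite (disjointFl dis aS).
have Cf : forall f, flow_cost c f = pc c S1 f + pc c S2 f by move=> f; exact: costU.
have Cg : forall x y, flow_cost c (glue S1 x y) = pc c S1 x + pc c S2 y.
  move=> x y; rewrite Cf; congr (_ + _); apply: pc_eq => a aS; rewrite /glue ?aS ?dis' //.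
have Csum : pc c S2 g' + pc c S2 g'' = pc c S2 f1 + pc c S2 f2.
  rewrite /pc -!big_split /=; apply: eq_bigr => a _; rewrite -!mulnDr (P a).1 //.
have flowG : forall x y d p r, flowS tl hd S1 o q p x -> flowS tl hd S2 o q r y -> d = p + r ->
    (forall a, glue S1 x y a <= u a) -> is_bflow tl hd u (st_balance o q d) (glue S1 x y).
  move=> x y d p r Fx Fy Ed cp; apply/bflowE; split => // w.
  by rewrite ET glue_net // Fx Fy bal_add Ed.
have robA : is_robust_flow tl hd fixed u (st_balance o q d1) (st_balance o q d2) (glue S1 f2 g') f2.
  split => //.
  + apply: (flowG _ _ _ _ _ A2 G1); first lia.
    move=> a; rewrite /glue; case: (a \in S1) => //; have := P a; have := cap1 a; have := cap2 a; lia.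
  + by apply/bflowE; split => //; rewrite ET.
  + move=> a af; rewrite /glue; case: (a \in S1) => //; have := P a; have := fx a af; lia.
have robB : is_robust_flow tl hd fixed u (st_balance o q d1) (st_balance o q d2) f1 (glue S1 f1 g'').
  split => //.
  + by apply/bflowE; split => //; rewrite ET.
  + apply: (flowG _ _ _ _ _ A1 G2); first lia.
    move=> a; rewrite /glue; case: (a \in S1) => //; have := P a; have := cap1 a; have := cap2 a; lia.
  + move=> a af; rewrite /glue; case: (a \in S1) => //; have := P a; have := fx a af; lia.
have dg' := flow_delta sp2 G1; have dg'' := flow_delta sp2 G2.
have dA1 : delta tl S1 o (glue S1 f2 g') = p2 by apply: delta_eq => a aS; rewrite /glue aS.
have dA2 : delta tl S2 o (glue S1 f2 g') = delta tl S2 o g'.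
  by apply: delta_eq => a aS; rewrite /glue dis'.
have dB1 : delta tl S1 o (glue S1 f1 g'') = p1 by apply: delta_eq => a aS; rewrite /glue aS.
have dB2 : delta tl S2 o (glue S1 f1 g'') = delta tl S2 o g''.
  by apply: delta_eq => a aS; rewrite /glue dis'.
move: (opt _ _ robA) (opt _ _ robB) => _ _.
have [le|gt] := leqP (pc c S1 f2 + pc c S2 g') (robust_cost c f1 f2).
- exists (glue S1 f2 g'), f2; split.
  + split => // h1 h2 R; apply: leq_trans (opt _ _ R).
    by rewrite /robust_cost Cg geq_max le leq_maxr.
  + by rewrite dA1.
  + rewrite dA2 dg'; lia.
- exists f1, (glue S1 f1 g''); split.
  + split => // h1 h2 R; apply: leq_trans (opt _ _ R).
    move: gt; rewrite /robust_cost Cg !Cf => gt.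
    rewrite geq_max leq_maxl /=; lia.
  + by rewrite dB1.
  + rewrite dB2 dg''; lia.
Qed.

Theorem mainTheorem15
  (V A : finType) (tl hd : A -> V) (fixed : {set A}) (u c : A -> nat)
  (o q : V) (d1 d2 : nat)
  (S1 : {set A}) (o1 q1 : V) (S2 : {set A}) (o2 q2 : V) :
  (d1 <= d2)%N ->
  isSP tl hd S1 o1 q1 -> isSP tl hd S2 o2 q2 ->
  (series_comp tl hd S1 o1 q1 S2 o2 q2 [set: A] o q \/
   parallel_comp tl hd S1 o1 q1 S2 o2 q2 [set: A] o q) ->
  (exists f1 f2, is_robust_flow tl hd fixed u
      (st_balance o q d1) (st_balance o q d2) f1 f2) ->
  exists f1 f2,
    [/\ is_optimal_robust_flow tl hd fixed u c
          (st_balance o q d1) (st_balance o q d2) f1 f2,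
        (delta tl S1 o1 f1 <= delta tl S1 o1 f2)%N
      & (delta tl S2 o2 f1 <= delta tl S2 o2 f2)%N].
Proof.
move=> d12 sp1 sp2 H [h1 [h2 Rh]].
have [M [[f1 [f2 [Rf Mf]]] Mmin]] := ex_min (P := fun n => exists g1 g2,
  is_robust_flow tl hd fixed u (st_balance o q d1) (st_balance o q d2) g1 g2 /\
  robust_cost c g1 g2 = n) (ex_intro _ _ (ex_intro _ h1 (ex_intro _ h2 (conj Rh erefl)))).
have opt : forall g1 g2, is_robust_flow tl hd fixed u (st_balance o q d1) (st_balance o q d2) g1 g2 ->
    robust_cost c f1 f2 <= robust_cost c g1 g2.
  by move=> g1 g2 R; rewrite Mf; apply: Mmin; exists g1, g2.
case: H => H.
- move: H => [dis [ET [E [Eo [Eq I]]]]]; subst o2 o q.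
  case: (Rf) => [/bflowE [_ T1] /bflowE [_ T2] _].
  rewrite ET in T1 T2.
  case: (series_restrict sp1 sp2 dis I T1) => F11 F12.
  case: (series_restrict sp1 sp2 dis I T2) => F21 F22.
  exists f1, f2; split; first by split.
  + by rewrite (flow_delta sp1 F11) (flow_delta sp1 F21).
  + by rewrite (flow_delta sp2 F12) (flow_delta sp2 F22).
- move: H => [dis [ET [Eo [E2 [Eq [E3 I]]]]]]; subst o1 o2 q1 q2.
  have I' : forall w, w \in verts tl hd S1 -> w \in verts tl hd S2 -> (w == o) || (w == q).
    by move=> w a b; move: (inter_in I a b); rewrite !inE.
  have [le1|lt1] := leqP (delta tl S1 o f1) (delta tl S1 o f2).
    have [le2|lt2] := leqP (delta tl S2 o f1) (delta tl S2 o f2).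
      by exists f1, f2.
    have := exchange sp2 sp1 (ltac:(by rewrite disjoint_sym)) (ltac:(by rewrite setUC))
      (fun w a b => I' w b a) d12 Rf opt lt2.
    by case=> F1 [F2 [O X Y]]; exists F1, F2.
  exact: exchange sp1 sp2 dis ET I' d12 Rf opt lt1.
Qed.
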